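(* Fix $\delta\in(0,1)$. Let $t\ge1$ and integers $l_1,\dots,l_t$, and consider unit vectors $\mathbf a_{i,j}\in\mathbb R^m$, $i\in\{1,\dots,t\}$, $j\in\{1,\dots,l_i\}$, in general position, such that $\sum_{j}\mathbf a_{i,j}=0$ for each $i$, and $\mathbf a_{i,j}\perp\mathbf a_{i',j'}$ whenever $i\ne i'$. Let unit vectors $\mathbf v_1,\dots,\mathbf v_t\in\mathbb R^m$ be orthogonal to each other and to all $\mathbf a_{i,j}$. Then there are positive scalars $\alpha_i,\beta_i$, $i\in\{1,\dots,t\}$, such that the matrix $\mathbf A$ whose columns are the vectors $\alpha_i\mathbf a_{i,j}+\beta_i\mathbf v_i$ over all $i,j$ satisfies, for each $i\in\{1,\dots,t\}$, \[ \min_{|S|=k_i}\frac{\mathrm{Er}_{\mathbf A}(S)}{\mathrm{OPT}_{k_i}}\ge(1-\delta)\,l_i,\qquad\text{where }k_i=l_1+\dots+l_i-1. \]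
   Context: For a matrix $\mathbf A$ with $n$ columns $\mathbf a_1,\dots,\mathbf a_n$ and $S\subseteq\{1,\dots,n\}$, $\mathbf P_S$ is the orthogonal projection onto $\mathrm{span}\{\mathbf a_i:i\in S\}$, $\mathrm{Er}_{\mathbf A}(S)=\|\mathbf A-\mathbf P_S\mathbf A\|_F^2$, and $\mathrm{OPT}_k=\min_{\mathrm{rank}(\mathbf B)=k}\|\mathbf A-\mathbf B\|_F^2$. The minimum is over column index subsets $S$ of size $k_i$. *)

(* Defs.v *)
From HB Require Import structures.
From mathcomp Require Import all_boot all_order all_algebra.
From mathcomp Require Import classical_sets reals.
Set Implicit Arguments. Unset Strict Implicit. Unset Printing Implicit Defensive.
Import Order.TTheory GRing.Theory Num.Theory.
Local Open Scope ring_scope.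
Local Open Scope classical_set_scope.

Section Defs.
Variable R : realType.

Definition dotv (m : nat) (u w : 'cV[R]_m) : R := \sum_(k < m) u k 0 * w k 0.

Definition frob2 (p q : nat) (M : 'M[R]_(p, q)) : R :=
  \sum_(i < p) \sum_(j < q) M i j ^+ 2.

Definition orth_proj (r m : nat) (U : 'M[R]_(r, m)) : 'M[R]_m :=
  let B := row_base U in (B^T *m invmx (B *m B^T) *m B).

Variables (J : finType) (m : nat) (c : J -> 'cV[R]_m).

Definition colmx : 'M[R]_(m, #|J|) := \matrix_(r, j) c (enum_val j) r 0.

Definition spanmx (S : {set J}) : 'M[R]_(#|S|, m) :=
  \matrix_(r, q) c (@enum_val J (mem S) r) q 0.

Definition PS (S : {set J}) : 'M[R]_m := orth_proj (spanmx S).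

Definition Er (S : {set J}) : R := frob2 (colmx - PS S *m colmx).

Definition OPT (k : nat) : R :=
  inf [set x | exists B : 'M[R]_(m, #|J|), \rank B = k /\ x = frob2 (colmx - B)].

End Defs.

Definition lin_indep (R : realType) (I : finType) (m : nat) (f : I -> 'cV[R]_m)
  (S : {set I}) : Prop :=
  forall coef : I -> R, \sum_(j in S) coef j *: f j = 0 -> forall j, j \in S -> coef j = 0.

(* general position of the vectors a_{i,1..l_i} (whose sum is 0): any proper
   subfamily (equivalently any l_i - 1 of them) is linearly independent *)
Definition gen_pos (R : realType) (t : nat) (l : 'I_t -> nat) (m : nat)
  (a : forall i : 'I_t, 'I_(l i) -> 'cV[R]_m) : Prop :=
  forall (i : 'I_t) (S : {set 'I_(l i)}), (#|S| < l i)%N -> lin_indep (a i) S.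

(* Main.v *)
Require Import Defs.
From HB Require Import structures.
From mathcomp Require Import all_boot all_order all_algebra.
From mathcomp Require Import classical_sets reals.
From mathcomp Require Import ring lra.
From mathcomp Require boolp.
Import Order.TTheory GRing.Theory Num.Theory.
Local Open Scope ring_scope.



Section Dot.
Context {R : realType} {m : nat}.
Implicit Types u w : 'cV[R]_m.

Lemma dotvC u w : dotv u w = dotv w u.
Proof. by apply: eq_bigr => k _; rewrite mulrC. Qed.
Lemma dotvDl u1 u2 w : dotv (u1 + u2) w = dotv u1 w + dotv u2 w.
Proof. by rewrite /dotv -big_split; apply: eq_bigr => k _; rewrite mxE mulrDl. Qed.
Lemma dotvZl c u w : dotv (c *: u) w = c * dotv u w.
Proof. by rewrite /dotv mulr_sumr; apply: eq_bigr => k _; rewrite mxE mulrA. Qed.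
Lemma dotvNl u w : dotv (- u) w = - dotv u w.
Proof. by rewrite -scaleN1r dotvZl mulN1r. Qed.
Lemma dotvBl u1 u2 w : dotv (u1 - u2) w = dotv u1 w - dotv u2 w.
Proof. by rewrite dotvDl dotvNl. Qed.
Lemma dotvDr u w1 w2 : dotv u (w1 + w2) = dotv u w1 + dotv u w2.
Proof. by rewrite dotvC dotvDl !(dotvC u). Qed.
Lemma dotvZr c u w : dotv u (c *: w) = c * dotv u w.
Proof. by rewrite dotvC dotvZl dotvC. Qed.
Lemma dotvBr u w1 w2 : dotv u (w1 - w2) = dotv u w1 - dotv u w2.
Proof. by rewrite dotvC dotvBl !(dotvC u). Qed.
Lemma dotv_suml (I : finType) (P : pred I) (F : I -> 'cV_m) w :
  dotv (\sum_(x | P x) F x) w = \sum_(x | P x) dotv (F x) w.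
Proof.
rewrite /dotv exchange_big; apply: eq_bigr => k _.
by rewrite summxE mulr_suml.
Qed.
Lemma dotv_sumr (I : finType) (P : pred I) (F : I -> 'cV_m) w :
  dotv w (\sum_(x | P x) F x) = \sum_(x | P x) dotv w (F x).
Proof. by rewrite dotvC dotv_suml; apply: eq_bigr => x _; rewrite dotvC. Qed.
Lemma dotv0l w : dotv 0 w = 0.
Proof. by rewrite /dotv big1 // => k _; rewrite mxE mul0r. Qed.
Lemma dotv0r w : dotv w 0 = 0.
Proof. by rewrite dotvC dotv0l. Qed.
Lemma dotv_ge0 u : 0 <= dotv u u.
Proof. by apply: sumr_ge0 => k _; rewrite -expr2 sqr_ge0. Qed.
Lemma dotv_eq0 u : dotv u u = 0 -> u = 0.
Proof.
move=> /psumr_eq0P H; apply/matrixP => k j; rewrite ord1 mxE.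
have /eqP := H (fun k _ => ltac:(by rewrite -expr2 sqr_ge0)) k isT.
by rewrite mulf_eq0 orbb => /eqP.
Qed.
Lemma dotv_CS u w : dotv u w ^+ 2 <= dotv u u * dotv w w.
Proof.
have [w0|wn0] := eqVneq (dotv w w) 0.
  by rewrite (dotv_eq0 _ w0) dotv0r dotv0l expr0n mulr0.
have wp : 0 < dotv w w by rewrite lt_def wn0 dotv_ge0.
have := dotv_ge0 (dotv w w *: u - dotv u w *: w).
rewrite !(dotvBl, dotvBr, dotvZl, dotvZr) (dotvC w u).
set a := dotv u u; set b := dotv u w; set c := dotv w w => H.
have : 0 <= c * (c * a - b ^+ 2) by rewrite expr2; lra.
by rewrite pmulr_rge0 // subr_ge0 mulrC.
Qed.
End Dot.



Section Mx.
Context {R : realType}.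



Lemma frob2_cols p q (M : 'M[R]_(p, q)) :
  frob2 M = \sum_(o < q) dotv (col o M) (col o M).
Proof.
rewrite /frob2 exchange_big; apply: eq_bigr => o _; apply: eq_bigr => k _.
by rewrite !mxE expr2.
Qed.

Lemma frob2_ge_col p q (M : 'M[R]_(p, q)) (o : 'I_q) :
  dotv (col o M) (col o M) <= frob2 M.
Proof.
rewrite frob2_cols (bigD1 o) //= lerDl; apply: sumr_ge0 => j _; exact: dotv_ge0.
Qed.

Lemma frob2_ge0 p q (M : 'M[R]_(p, q)) : 0 <= frob2 M.
Proof. rewrite frob2_cols; apply: sumr_ge0 => j _; exact: dotv_ge0. Qed.

Lemma mulmx_CS p q (M : 'M[R]_(p, q)) (x : 'cV[R]_q) :
  dotv (M *m x) (M *m x) <= frob2 M * dotv x x.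
Proof.
rewrite /frob2 /dotv mulr_suml; apply: ler_sum => r _.
have := dotv_CS (row r M)^T x.
rewrite /dotv.
have -> : \sum_(k < q) (row r M)^T k 0 * x k 0 = (M *m x) r 0.
  by rewrite mxE; apply: eq_bigr => k _; rewrite !mxE.
rewrite -expr2 => H; apply: (le_trans H); rewrite ler_wpM2r //.
  by apply: sumr_ge0 => k _; rewrite -expr2 sqr_ge0.
by rewrite le_eqVlt; apply/orP; left; apply/eqP; apply: eq_bigr => k _; rewrite !mxE expr2.
Qed.

Lemma dotv_trmx_mul p m (u : 'cV[R]_m) (M : 'M[R]_(p, m)) (y : 'cV[R]_p) :
  dotv u (M^T *m y) = \sum_(s < p) y s 0 * dotv u (row s M)^T.
Proof.
rewrite /dotv (eq_bigr (fun k => \sum_(s < p) u k 0 * (M s k * y s 0))); last first.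
  by move=> k _; rewrite mxE mulr_sumr; apply: eq_bigr => s _; rewrite mxE.
rewrite exchange_big; apply: eq_bigr => s _; rewrite mulr_sumr; apply: eq_bigr => k _.
by rewrite !mxE; ring.
Qed.

Variables (J : finType) (m : nat) (c : J -> 'cV[R]_m).

Lemma col_colmx o : col o (colmx c) = c (enum_val o).
Proof. by apply/matrixP => r j; rewrite !mxE ord1. Qed.

Lemma colmx_mul (x : 'cV[R]_#|J|) :
  colmx c *m x = \sum_(o < #|J|) x o 0 *: c (enum_val o).
Proof.
apply/matrixP => r j; rewrite ord1 !mxE summxE; apply: eq_bigr => o _.
by rewrite !mxE mulrC.
Qed.

Lemma Er_lb (w : J -> 'cV[R]_m)
  (hdual : forall p q, dotv (w q) (c p) = (p == q)%:R) (S : {set J}) q :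
  q \notin S -> 1 / dotv (w q) (w q) <= Er c S.
Proof.
move=> qS.
set M := colmx c - PS c S *m colmx c.
have eM : col (enum_rank q) M = c q - PS c S *m c q.
  apply/matrixP => r j; rewrite ord1 !mxE; congr (_ - _).
    by rewrite enum_rankK.
  by apply: eq_bigr => k _; rewrite !mxE enum_rankK.
have := @frob2_ge_col _ _ M (enum_rank q); rewrite eM => H.
apply: le_trans H.
set e := c q - _.
have he : dotv (w q) e = 1.
  rewrite /e dotvBr hdual eqxx.
  suff -> : dotv (w q) (PS c S *m c q) = 0 by rewrite subr0.
  set B := row_base (spanmx c S).
  have : ((PS c S *m c q)^T <= spanmx c S)%MS.
    rewrite /PS /orth_proj -/B -!mulmxA trmx_mul trmxK.
    apply: submx_trans (submxMl _ _) _.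
    by rewrite (eq_row_base (spanmx c S)).
  case/submxP => D HD.
  have -> : PS c S *m c q = (spanmx c S)^T *m D^T by rewrite -trmx_mul -HD trmxK.
  rewrite dotv_trmx_mul.
  apply: big1 => s _.
  have -> : (row s (spanmx c S))^T = c (enum_val s).
    by apply/matrixP => r j; rewrite ord1 !mxE.
  rewrite hdual; case: eqP => [es|]; last by rewrite mulr0.
  by move: (enum_valP s); rewrite es (negbTE qS).
have := dotv_CS (w q) e; rewrite he expr1n => H1.
have wp : 0 < dotv (w q) (w q).
  rewrite lt_def dotv_ge0 andbT; apply/eqP => w0; move: H1; rewrite w0 mul0r.
  by rewrite ler10.
by rewrite ler_pdivrMr // mulrC.
Qed.

Lemma frob_lb (w : J -> 'cV[R]_m)
  (hdual : forall p q, dotv (w q) (c p) = (p == q)%:R) (B : 'M[R]_(m, #|J|)) :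
  (\rank B < #|J|)%N ->
  1 <= (\sum_(o < #|J|) dotv (w (enum_val o)) (w (enum_val o))) * frob2 (colmx c - B).
Proof.
move=> rB.
have : kermx B^T != 0.
  by rewrite kermx_eq0 /row_free mxrank_tr neq_ltn rB.
case/rowV0Pn => v /sub_kermxP vB vn0.
set x := v^T.
have Bx : B *m x = 0 by rewrite -[B]trmxK -trmx_mul vB trmx0.
set y := colmx c *m x.
have Ey : (colmx c - B) *m x = y by rewrite mulmxBl Bx subr0.
have hx : forall o, dotv (w (enum_val o)) y = x o 0.
  move=> o; rewrite /y colmx_mul dotv_sumr (bigD1 o) //= dotvZr hdual eqxx mulr1.
  rewrite big1 ?addr0 // => o' ne; rewrite dotvZr hdual (inj_eq enum_val_inj).
  by rewrite (negbTE ne) mulr0.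
set W := \sum_(o < #|J|) _.
set F := frob2 _.
have xx : dotv x x = \sum_(o < #|J|) (dotv (w (enum_val o)) y)^+2.
  by apply: eq_bigr => o _; rewrite hx expr2.
have H1 : dotv x x <= W * dotv y y.
  rewrite xx /W mulr_suml; apply: ler_sum => o _; exact: dotv_CS.
have H2 : dotv y y <= F * dotv x x by rewrite -Ey; exact: mulmx_CS.
have W0 : 0 <= W by apply: sumr_ge0 => o _; exact: dotv_ge0.
have xp : 0 < dotv x x.
  rewrite lt_def dotv_ge0 andbT; apply/eqP => /dotv_eq0 x0.
  by move: vn0; rewrite -[v]trmxK -/x x0 trmx0 eqxx.
have : dotv x x <= W * F * dotv x x.
  apply: (le_trans H1); rewrite -mulrA; exact: ler_wpM2l.
by rewrite ler_pMl.
Qed.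

Lemma rank_colmx (b d : J -> 'cV[R]_m) (T : {set J}) (coef : J -> J -> R) :
  (forall x y, x \in T -> y \in T -> dotv (d x) (b y) = (x == y)%:R) ->
  (forall q, b q = \sum_(y in T) coef q y *: b y) ->
  \rank (colmx b) = #|T|.
Proof.
move=> hd hb.
set C := spanmx b T.
have rC : \rank C = #|T|.
  apply/eqP; rewrite eqn_leq rank_leq_row /=.
  set W := \matrix_(k < m, s < #|T|) d (enum_val s) k 0.
  have CW : C *m W = 1%:M.
    apply/matrixP => s s'; rewrite !mxE.
    transitivity (dotv (d (enum_val s')) (b (enum_val s))).
      by rewrite /dotv; apply: eq_bigr => k _; rewrite !mxE mulrC.
    by rewrite hd ?enum_valP // (inj_eq enum_val_inj) eq_sym.
  by have := mxrankM_maxl C W; rewrite CW mxrank1.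
rewrite -mxrank_tr -rC; apply/eqP; rewrite eqn_leq; apply/andP; split; apply: mxrankS.
  apply/row_subP => o.
  have -> : row o (colmx b)^T = (b (enum_val o))^T.
    by apply/matrixP => i j; rewrite ord1 !mxE.
  have -> : (b (enum_val o))^T = \sum_(y in T) coef (enum_val o) y *: (b y)^T.
    apply/matrixP => i j; rewrite mxE {1}hb !summxE; apply: eq_bigr => y _.
    by rewrite !mxE.
  apply: summx_sub => y yT.
  apply: scalemx_sub.
  have -> : (b y)^T = row (enum_rank_in yT y) C.
    by apply/matrixP => i j; rewrite ord1 !mxE enum_rankK_in.
  exact: row_sub.
apply/row_subP => s.
have -> : row s C = row (enum_rank (enum_val s)) (colmx b)^T.
  by apply/matrixP => i j; rewrite ord1 !mxE enum_rankK.
exact: row_sub.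
Qed.

End Mx.



Lemma sum_tag (I : finType) (T_ : I -> finType) (V : nmodType)
  (F : {i : I & T_ i} -> V) (P : pred I) :
  \sum_(y | P (tag y)) F y = \sum_(i | P i) \sum_(j : T_ i) F (Tagged T_ j).
Proof.
rewrite (sig_big_dep P (fun _ _ => true) (fun i j => F (Tagged T_ j))).
by apply: eq_big => [[i j]|[i j] _] //=; rewrite andbT.
Qed.

Lemma card_tag (I : finType) (T_ : I -> finType) (P : pred I) :
  #|[set y : {i : I & T_ i} | P (tag y)]| = (\sum_(i | P i) #|T_ i|)%N.
Proof.
rewrite -sum1_card (eq_bigl (fun y => P (tag y))); last by move=> y; rewrite inE.
transitivity (\sum_(i | P i) \sum_(j : T_ i) 1)%N; last first.
  by apply: eq_bigr => i _; rewrite sum1_card.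
rewrite (sig_big_dep P (fun _ _ => true) (fun _ _ => 1%N)).
by apply: eq_bigl => -[i j] /=; rewrite andbT.
Qed.

Lemma exists_g (R : realType) t (l : 'I_t -> nat) m (a : forall i, 'I_(l i) -> 'cV[R]_m)
  (ha_gp : gen_pos a) (ha_sum : forall i, \sum_(j < l i) a i j = 0)
  (i : 'I_t) (r : 'I_(l i)) :
  exists z : 'I_(l i) -> R, forall j,
    dotv (\sum_(k < l i) z k *: a i k) (a i j) = (j == r)%:R - (l i)%:R^-1.
Proof.
set n := l i.
set H : 'M[R]_n := \matrix_(j, k) (dotv (a i j) (a i k) + (j == r)%:R * (k == r)%:R).
have zHE : forall z : 'rV[R]_n, forall k, (z *m H) 0 k =
    dotv (\sum_(j < n) z 0 j *: a i j) (a i k) + z 0 r * (k == r)%:R.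
  move=> z k; rewrite !mxE dotv_suml.
  rewrite (eq_bigr (fun j => dotv (z 0 j *: a i j) (a i k) + z 0 j * ((j == r)%:R * (k == r)%:R)));
    last by move=> j _; rewrite mxE mulrDr dotvZl.
  rewrite big_split /=; congr (_ + _).
  rewrite (bigD1 r) //= big1 ?addr0; first by rewrite eqxx mul1r.
  by move=> j jr; rewrite (negbTE jr) mul0r mulr0.
have Hu : H \in unitmx.
  rewrite -row_free_unit; apply: inj_row_free => z zH0.
  set g := \sum_(j < n) z 0 j *: a i j.
  have hk : forall k, dotv g (a i k) + z 0 r * (k == r)%:R = 0.
    by move=> k; rewrite -zHE zH0 mxE.
  have hs : dotv g g + z 0 r ^+ 2 = 0.
    have : \sum_(k < n) z 0 k * (dotv g (a i k) + z 0 r * (k == r)%:R) = 0.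
      by apply: big1 => k _; rewrite hk mulr0.
    rewrite (eq_bigr (fun k => dotv g (z 0 k *: a i k) + z 0 k * (z 0 r * (k == r)%:R)));
      last by move=> k _; rewrite mulrDr dotvZr.
    rewrite big_split /= -dotv_sumr -/g (bigD1 r) //= big1 ?addr0; last first.
      by move=> k kr; rewrite (negbTE kr) !mulr0.
    by rewrite eqxx mulr1 -expr2.
  have g0 : dotv g g = 0.
    apply/eqP; rewrite eq_le dotv_ge0 andbT -hs lerDl sqr_ge0 //.
  have zr : z 0 r = 0.
    by move: hs; rewrite g0 add0r => /eqP; rewrite sqrf_eq0 => /eqP.
  have gz := dotv_eq0 _ g0.
  have Hind := ha_gp i [set~ r].
  have : (#|[set~ r]| < l i)%N.
    have lp : (0 < l i)%N by apply: leq_ltn_trans (ltn_ord r).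
    by rewrite cardsC1 card_ord prednK.
  move=> /Hind /(_ (fun j => z 0 j)) Hz.
  have Hz0 : \sum_(j in [set~ r]) z 0 j *: a i j = 0.
    apply: (etrans _ gz); rewrite /g [in RHS](bigD1 r) //= zr scale0r add0r.
    by apply: eq_bigl => j; rewrite !inE.
  apply/matrixP => o j; rewrite ord1 mxE.
  have [->|jr] := eqVneq j r; first exact: zr.
  by have := Hz Hz0 j; rewrite !inE jr; apply.
set b : 'rV[R]_n := \row_j ((j == r)%:R - n%:R^-1).
set z := b *m invmx H.
have zH : z *m H = b by rewrite mulmxKV.
exists (fun j => z 0 j) => j.
set g := \sum_(k < n) _.
have hk : forall k, dotv g (a i k) + z 0 r * (k == r)%:R = b 0 k.
  by move=> k; rewrite -zHE zH.
have n0 : n != 0%N by rewrite /n -lt0n; apply: leq_ltn_trans (ltn_ord r).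
have zr : z 0 r = 0.
  have : \sum_(k < n) (dotv g (a i k) + z 0 r * (k == r)%:R) = \sum_(k < n) b 0 k.
    by apply: eq_bigr => k _; exact: hk.
  rewrite big_split /= -dotv_sumr ha_sum dotv0r add0r (bigD1 r) //= eqxx mulr1.
  rewrite big1 ?addr0; last by move=> k kr; rewrite (negbTE kr) mulr0.
  move=> ->; rewrite (eq_bigr (fun k => (k == r)%:R - n%:R^-1)); last by move=> k _; rewrite mxE.
  rewrite sumrB sumr_const card_ord (bigD1 r) //= eqxx big1 ?addr0; last first.
    by move=> k kr; rewrite (negbTE kr).
  by rewrite -[_ *+ l i]mulr_natr mulVf ?subrr // pnatr_eq0.
by have := hk j; rewrite zr mul0r addr0 mxE.
Qed.



Theorem lemma4 (R : realType) (delta : R) (hdelta : 0 < delta < 1)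
  (t : nat) (ht : (1 <= t)%N) (l : 'I_t -> nat) (hl : forall i, (0 < l i)%N)
  (m : nat) (a : forall i : 'I_t, 'I_(l i) -> 'cV[R]_m) (v : 'I_t -> 'cV[R]_m)
  (ha_unit : forall i j, dotv (a i j) (a i j) = 1)
  (ha_gp : gen_pos a)
  (ha_sum : forall i, \sum_(j < l i) a i j = 0)
  (ha_orth : forall i i' j j', i != i' -> dotv (a i j) (a i' j') = 0)
  (hv_unit : forall i, dotv (v i) (v i) = 1)
  (hv_orth : forall i i', i != i' -> dotv (v i) (v i') = 0)
  (hva : forall i i' j, dotv (v i) (a i' j) = 0) :
  exists alpha beta : 'I_t -> R,
    (forall i, 0 < alpha i /\ 0 < beta i) /\
    let cols : {i : 'I_t & 'I_(l i)} -> 'cV[R]_m :=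
      fun p => alpha (tag p) *: a (tag p) (tagged p) + beta (tag p) *: v (tag p) in
    forall i : 'I_t,
      let k := (\sum_(i' < t | (i' <= i)%N) l i').-1 in
      forall S : {set {i : 'I_t & 'I_(l i)}}, #|S| = k ->
        (1 - delta) * (l i)%:R <= Er cols S / OPT cols k.
Proof.
move: hdelta => /andP [d0 d1].
have hvv : forall i i', dotv (v i) (v i') = (i == i')%:R.
  move=> i i'; have [->|ne] := eqVneq i i'; first by rewrite hv_unit.
  exact: hv_orth.
have hg : forall q : {i : 'I_t & 'I_(l i)}, exists g : 'cV[R]_m,
   (forall y : {i : 'I_t & 'I_(l i)}, dotv g (a (tag y) (tagged y)) =
       if tag y == tag q then (y == q)%:R - (l (tag q))%:R^-1 else 0)
   /\ (forall i', dotv g (v i') = 0).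
  move=> [i r]; have [z hz] := @exists_g R t l m a ha_gp ha_sum i r.
  exists (\sum_(k < l i) z k *: a i k); split.
  - move=> [i' j] /=.
    have [e|ne] := eqVneq i' i.
      by subst i'; rewrite hz eq_Tagged.
    rewrite dotv_suml big1 // => k _; rewrite dotvZl ha_orth ?mulr0 //.
    by rewrite eq_sym.
  - by move=> i'; rewrite dotv_suml big1 // => k _; rewrite dotvZl dotvC hva mulr0.
have [g hgP] := boolp.choice hg.
set n := #|{: {i : 'I_t & 'I_(l i)}}|.
have card_grp : forall i, #|[set y : {i : 'I_t & 'I_(l i)} | tag y == i]| = l i.
  move=> i; rewrite (@card_tag _ (fun i => 'I_(l i)) (fun i' => i' == i)) big_pred1_eq card_ord //.
have l_le_n : forall i, (l i <= n)%N by move=> i; rewrite -card_grp max_card.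
set nR : R := n%:R.
have lR1 : forall i, 1 <= (l i)%:R :> R by move=> i; rewrite ler1n hl.
have lRn : forall i, (l i)%:R <= nR by move=> i; rewrite ler_nat l_le_n.
have nR1 : 1 <= nR by apply: le_trans (lR1 (Ordinal ht)) (lRn _).
set eps := delta / 4.
have e0 : 0 < eps by rewrite /eps; lra.
have e1 : eps < 1 by rewrite /eps; lra.
set Gs := \sum_q dotv (g q) (g q).
have Gs0 : 0 <= Gs by apply: sumr_ge0 => q _; exact: dotv_ge0.
have gGs : forall q, dotv (g q) (g q) <= Gs.
  move=> q; rewrite /Gs (bigD1 q) //= lerDl; apply: sumr_ge0 => y _; exact: dotv_ge0.
set K := 1 + Gs * nR ^+ 2 / eps.
have K1 : 1 <= K.
  rewrite /K lerDl; apply: divr_ge0; last exact: ltW.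
  by apply: mulr_ge0 => //; apply: sqr_ge0.
have epsK : eps * K = eps + Gs * nR ^+ 2 by rewrite /K; field; apply: lt0r_neq0.
set eta := eps / (nR * (K ^+ 2 + 1)).
have D0 : 0 < nR * (K ^+ 2 + 1).
  apply: mulr_gt0; first lra.
  by apply: ltr_pwDr => //; apply: sqr_ge0.
have eta0 : 0 < eta by apply: divr_gt0.
have etaD : eta * (nR * (K ^+ 2 + 1)) = eps by rewrite /eta mulfVK // lt0r_neq0.
have K2 : 1 <= K ^+ 2 by nra.
have eta1 : nR * eta <= 1 by nra.
have eta_le1 : eta <= 1 by nra.
have eta2 : nR * (K ^+ 2 + 1) * eta ^+ 2 <= eps by nra.
set beta : 'I_t -> R := fun i => eta ^+ i.
set alpha : 'I_t -> R := fun i => K * beta i.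
have beta0 : forall i, 0 < beta i by move=> i; exact: exprn_gt0.
have alpha0 : forall i, 0 < alpha i by move=> i; apply: mulr_gt0 => //; lra.
exists alpha, beta; split; first by move=> i; split.
move=> cols i k S cardS.
have lne0 : forall i, (l i)%:R != 0 :> R by move=> i'; rewrite pnatr_eq0 -lt0n hl.
have lgt0 : forall i, 0 < (l i)%:R :> R by move=> i'; rewrite ltr0n hl.
have Kn0 : K != 0 by apply: lt0r_neq0; lra.
have bn0 : forall i, beta i != 0 by move=> i'; exact: lt0r_neq0.
set w := fun q : {i : 'I_t & 'I_(l i)} =>
  (((l (tag q))%:R * beta (tag q))^-1 *: v (tag q) + (alpha (tag q))^-1 *: g q).
have hwa : forall x y, dotv (w x) (a (tag y) (tagged y)) =
   if tag y == tag x then (alpha (tag x))^-1 * ((y == x)%:R - (l (tag x))%:R^-1) else 0.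
  move=> x y; rewrite /w dotvDl !dotvZl hva mulr0 add0r (hgP x).1.
  by case: ifP => _; rewrite ?mulr0.
have hwv : forall x i', dotv (w x) (v i') =
    ((l (tag x))%:R * beta (tag x))^-1 * (tag x == i')%:R.
  by move=> x i'; rewrite /w dotvDl !dotvZl hvv (hgP x).2 mulr0 addr0.
have hdual : forall p q, dotv (w q) (cols p) = (p == q)%:R.
  move=> p q; rewrite /cols dotvDr !dotvZr hwa hwv.
  have [e|ne] := eqVneq (tag p) (tag q).
    rewrite e /= /alpha; field.
    by rewrite lne0 Kn0 bn0.
  have ne' : tag q != tag p by rewrite eq_sym.
  rewrite /= !mulr0 add0r.
  suff /negbTE -> : p != q by [].
  by apply: contra ne => /eqP ->.
have hww : forall q, dotv (w q) (w q) =
    (((l (tag q))%:R * beta (tag q))^-1) ^+ 2 + ((alpha (tag q))^-1) ^+ 2 * dotv (g q) (g q).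
  move=> q; rewrite /w !(dotvDl, dotvDr, dotvZl, dotvZr) hv_unit (hgP q).2 dotvC (hgP q).2.
  ring.
have key_w : forall q, dotv (w q) (w q) <=
    (1 + eps) * (((l (tag q))%:R * beta (tag q))^-1) ^+ 2.
  move=> q; rewrite hww /alpha.
  set L := (l (tag q))%:R; set b := beta (tag q); set gg := dotv (g q) (g q).
  have gg0 : 0 <= gg := dotv_ge0 _.
  have ggG : gg <= Gs := gGs q.
  have L1 : 1 <= L := lR1 _.
  have Ln : L <= nR := lRn _.
  have h1 : gg * L ^+ 2 <= eps * K ^+ 2.
    have LL : L ^+ 2 <= nR ^+ 2 by nra.
    have KK : K <= K ^+ 2 by nra.
    apply: (@le_trans _ _ (Gs * L ^+ 2)); first by rewrite ler_wpM2r // sqr_ge0.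
    apply: (@le_trans _ _ (Gs * nR ^+ 2)); first by rewrite ler_wpM2l.
    apply: (@le_trans _ _ (eps * K)); first lra.
    by rewrite ler_wpM2l //; lra.
  have h2 : gg / K ^+ 2 <= eps / L ^+ 2.
    rewrite ler_pdivrMr ?exprn_gt0 //; last lra.
    by rewrite mulrAC ler_pdivlMr ?exprn_gt0 //; lra.
  have E1 : ((K * b)^-1) ^+ 2 * gg = (gg / K ^+ 2) * (b^-1) ^+ 2.
    by field; rewrite Kn0 bn0.
  have E2 : (1 + eps) * ((L * b)^-1) ^+ 2 = ((L * b)^-1) ^+ 2 + (eps / L ^+ 2) * (b^-1) ^+ 2.
    by field; rewrite lne0 bn0.
  by rewrite E1 E2 lerD2l ler_wpM2r // sqr_ge0.
set A := [set y : {i : 'I_t & 'I_(l i)} | (tag y <= i)%N].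
have sum_pos : (0 < \sum_(i' < t | (i' <= i)%N) l i')%N.
  by rewrite (bigD1 i) //=; apply: (leq_trans (hl i)); exact: leq_addr.
have cardA : #|A| = k.+1.
  rewrite /A (@card_tag _ (fun i => 'I_(l i)) (fun i' => (i' <= i)%N)).
  rewrite (eq_bigr (fun i' => l i')); last by move=> i' _; rewrite card_ord.
  by rewrite /k prednK.
have [q qA qS] : exists2 q, q \in A & q \notin S.
  apply/subsetPn; apply/negP => sub; have := subset_leq_card sub.
  by rewrite cardA cardS ltnn.
have Erq := @Er_lb _ _ _ cols w hdual S q qS.
have wwp : forall q, 0 < dotv (w q) (w q).
  move=> q'; rewrite hww.
  have h2 : 0 <= ((alpha (tag q'))^-1) ^+ 2 * dotv (g q') (g q').
    by apply: mulr_ge0; [apply: sqr_ge0 | apply: dotv_ge0].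
  have h1 : 0 < (((l (tag q'))%:R * beta (tag q'))^-1) ^+ 2.
    by rewrite exprn_gt0 // invr_gt0 mulr_gt0.
  lra.
have Erl : ((l (tag q))%:R * beta (tag q)) ^+ 2 / (1 + eps) <= Er cols S.
  apply: le_trans Erq; rewrite div1r.
  have Yp : 0 < (1 + eps) * (((l (tag q))%:R * beta (tag q))^-1) ^+ 2.
    by apply: mulr_gt0; [lra | rewrite exprn_gt0 // invr_gt0 mulr_gt0].
  have -> : ((l (tag q))%:R * beta (tag q)) ^+ 2 / (1 + eps) =
      ((1 + eps) * (((l (tag q))%:R * beta (tag q))^-1) ^+ 2)^-1.
    have e1n : 1 + eps != 0 by apply: lt0r_neq0; lra.
    by field; rewrite bn0 lne0 e1n.
  by rewrite lef_pV2 ?posrE // key_w.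
have Lq : (l i)%:R * beta i <= (l (tag q))%:R * beta (tag q).
  move: qA; rewrite inE leq_eqVlt => /orP [/eqP e|lt].
    by have -> : tag q = i by apply: val_inj.
  have bi : beta i <= eta * beta (tag q).
    rewrite /beta -exprS; apply: ler_wiXn2l => //; exact: ltW.
  apply: (@le_trans _ _ (nR * (eta * beta (tag q)))).
    by apply: ler_pM => //; apply: ltW.
  rewrite mulrA; apply: (@le_trans _ _ (beta (tag q))).
    by apply: ler_piMl; [exact: ltW (beta0 _) | exact: eta1].
  by rewrite ler_peMl //; apply: ltW.
have ELB : ((l i)%:R * beta i) ^+ 2 / (1 + eps) <= Er cols S.
  apply: le_trans Erl; rewrite ler_wpM2r //; first by rewrite invr_ge0; lra.
  by rewrite ler_pXn2r // ?nnegrE; apply: mulr_ge0; apply: ltW.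
pose r0 : 'I_(l i) := Ordinal (hl i).
pose q0 : {i : 'I_t & 'I_(l i)} := Tagged (fun i => 'I_(l i)) r0.
pose T := A :\ q0.
have q0A : q0 \in A by rewrite inE /=.
have cardT : #|T| = k by move: cardA; rewrite (cardsD1 q0) q0A add1n => [[]].
have inT : forall y : {i : 'I_t & 'I_(l i)}, (y \in T) = (y != q0) && (tag y <= i)%N by move=> y; rewrite !inE.
have tagcase : forall y : {i : 'I_t & 'I_(l i)}, (tag y <= i)%N -> (tag y < i)%N \/ tag y = i.
  move=> y; rewrite leq_eqVlt => /orP [/eqP e|lt]; [right; exact: val_inj | by left].
have neq_tag : forall p q : {i : 'I_t & 'I_(l i)}, tag p != tag q -> (p == q) = false.
  by move=> p q' ne; apply: contraNF ne => /eqP ->.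
pose b := fun y : {i : 'I_t & 'I_(l i)} => if (tag y < i)%N then cols y
   else if tag y == i then alpha (tag y) *: a (tag y) (tagged y) else 0.
pose d := fun y : {i : 'I_t & 'I_(l i)} => if (tag y < i)%N then w y else w y - w q0.
pose coef : {i : 'I_t & 'I_(l i)} -> {i : 'I_t & 'I_(l i)} -> R :=
   fun q y => if q \in T then (y == q)%:R
   else if tag q == i then - (tag y == i)%:R else 0.
have hd : forall x y, x \in T -> y \in T -> dotv (d x) (b y) = (x == y)%:R.
  move=> x y; rewrite !inT => /andP [xq0 xi] /andP [yq0 yi].
  rewrite /d /b.
  case: (tagcase x xi) => [xlt|xe]; case: (tagcase y yi) => [ylt|ye].
  - by rewrite xlt ylt hdual eq_sym.
  - have ylt' : (tag y < i)%N = false by rewrite ye ltnn.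
    have yeq : (tag y == i) = true by rewrite ye eqxx.
    rewrite xlt ylt' yeq dotvZr hwa.
    have ne : tag y != tag x.
      by rewrite ye; apply: contraTneq xlt => ->; rewrite ltnn.
    by rewrite (negbTE ne) mulr0 eq_sym neq_tag.
  - rewrite xe ltnn ylt dotvBl !hdual.
    have ne : tag y != tag x.
      by rewrite xe; apply: contraTneq ylt => ->; rewrite ltnn.
    have ne0 : tag y != tag q0.
      by rewrite /=; apply: contraTneq ylt => ->; rewrite ltnn.
    by rewrite (neq_tag y x ne) (neq_tag y q0 ne0) (neq_tag x y) ?subrr // eq_sym.
  - have ylt' : (tag y < i)%N = false by rewrite ye ltnn.
    have yeq : (tag y == i) = true by rewrite ye eqxx.
    rewrite xe ltnn ylt' yeq dotvZr dotvBl !hwa ye xe /= eqxx.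
    rewrite (negbTE yq0) /alpha [x == y]eq_sym /=; field.
    by rewrite lne0 bn0 Kn0.
have q0T : q0 \notin T by rewrite inT eqxx.
have hb : forall q, b q = \sum_(y in T) coef q y *: b y.
  move=> q'.
  case: (boolP (q' \in T)) => q'T.
    rewrite (bigD1 q') //= /coef q'T eqxx scale1r big1 ?addr0 // => y /andP [_ yq].
    by rewrite (negbTE yq) scale0r.
  case: (boolP (tag q' == i)) => q'i.
    have eq0 : q' = q0.
      apply/eqP; move: q'T; rewrite inT (eqP q'i) leqnn andbT.
      by rewrite negbK.
    subst q'.
    pose F := fun y : {i : 'I_t & 'I_(l i)} =>
      if y != q0 then - (alpha (tag y) *: a (tag y) (tagged y)) else 0.
    have E1 : \sum_(y in T) coef q0 y *: b y = \sum_(y | tag y == i) F y.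
      rewrite big_mkcond [RHS]big_mkcond; apply: eq_bigr => y _.
      rewrite /coef (negbTE q0T) /= eqxx inT /F.
      case: (boolP (tag y == i)) => yi.
        have -> : (tag y <= i)%N by rewrite (eqP yi).
        case: (boolP (y == q0)) => yq //=.
        rewrite scaleN1r /b.
        have -> : (tag y < i)%N = false by rewrite (eqP yi) ltnn.
        by rewrite yi.
      by case: (_ && _) => //; rewrite mulr0n oppr0 scale0r.
    rewrite E1 (@sum_tag _ (fun i => 'I_(l i)) _ F (fun i' => i' == i)) big_pred1_eq.
    rewrite /b /= ltnn eqxx.
    rewrite (eq_bigr (fun j => if j != r0 then - (alpha i *: a i j) else 0)); last first.
      by move=> j _; rewrite /F /= eq_Tagged.
    rewrite -big_mkcond /= sumrN -scaler_sumr.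
    have : a i r0 + \sum_(j < l i | j != r0) a i j = 0.
      by have := ha_sum i; rewrite (bigD1 r0).
    by move/eqP; rewrite addr_eq0 => /eqP ->; rewrite scalerN.
  have q'lt : (tag q' < i)%N = false.
    apply: negbTE; move: q'T; rewrite inT negb_and negbK.
    have -> : (q' == q0) = false by apply: neq_tag.
    by rewrite /=; apply: contra => /ltnW.
  rewrite /b q'lt (negbTE q'i) big1 // => y _.
  by rewrite /coef (negbTE q'T) (negbTE q'i) scale0r.
have rB : \rank (colmx b) = k by rewrite (@rank_colmx _ _ _ b d T coef hd hb) cardT.
have colE : colmx cols - colmx b = colmx (fun y => cols y - b y).
  by apply/matrixP => r j; rewrite !mxE.
have reidx : forall G : {i : 'I_t & 'I_(l i)} -> R,
    \sum_(o < n) G (enum_val o) = \sum_y G y.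
  move=> G; rewrite [RHS](reindex (fun o : 'I_n => enum_val o)) //=.
  exact: onW_bij (enum_val_bij _).
have hav : forall i i' j, dotv (a i' j) (v i) = 0 by move=> *; rewrite dotvC hva.
set C := (K ^+ 2 + 1) * (eta ^+ i.+1) ^+ 2.
have C0 : 0 <= C by apply: mulr_ge0; [lra | apply: sqr_ge0].
have fb : forall y, dotv (cols y - b y) (cols y - b y) <= (tag y == i)%:R * beta i ^+ 2 + C.
  move=> y; rewrite /b.
  have nn : 0 <= (tag y == i)%:R * beta i ^+ 2 by apply: mulr_ge0; [apply: ler0n | apply: sqr_ge0].
  case: (ltngtP (tag y) i) => [lt|gt|eq].
  - by rewrite subrr dotv0l; lra.
  - have -> : (tag y == i) = false.
      by apply/negbTE; apply: contraTneq gt => ->; rewrite ltnn.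
    rewrite subr0 /cols !(dotvDl, dotvDr, dotvZl, dotvZr) ha_unit hv_unit hva hav.
    have bb : beta (tag y) <= eta ^+ i.+1.
      by apply: ler_wiXn2l => //; exact: ltW.
    have bb2 : beta (tag y) ^+ 2 <= (eta ^+ i.+1) ^+ 2.
      have := beta0 (tag y); nra.
    rewrite !mulr0 !mulr1 !addr0 !add0r.
    have -> : alpha (tag y) * alpha (tag y) + beta (tag y) * beta (tag y) =
       (K ^+ 2 + 1) * beta (tag y) ^+ 2 by rewrite /alpha; ring.
    rewrite /= mul0r add0r.
    have : (K ^+ 2 + 1) * beta (tag y) ^+ 2 <= C by rewrite /C ler_wpM2l //; lra.
    lra.
  - have e' : tag y = i by apply: val_inj.
    have -> : (tag y == i) = true by rewrite e' eqxx.
    have -> : cols y - alpha (tag y) *: a (tag y) (tagged y) = beta (tag y) *: v (tag y).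
      by rewrite /cols addrAC subrr add0r.
    rewrite !(dotvZl, dotvZr) hv_unit e' mulr1 /= mul1r expr2.
    lra.
have Fb : frob2 (colmx cols - colmx b) <= (l i)%:R * beta i ^+ 2 * (1 + eps).
  rewrite colE frob2_cols.
  under eq_bigr do rewrite col_colmx.
  rewrite (reidx (fun y => dotv (cols y - b y) (cols y - b y))).
  apply: le_trans (ler_sum _ (fun y _ => fb y)) _.
  rewrite big_split /= -mulr_suml sumr_const.
  have -> : \sum_(y : {i : 'I_t & 'I_(l i)}) ((tag y == i)%:R : R) = (l i)%:R.
    rewrite (eq_bigr (fun y => if tag y == i then 1 else 0)); last by move=> y _; case: (_ == _).
    rewrite -big_mkcond /= -card_grp.
    rewrite (eq_bigl (fun y => y \in [set y : {i : 'I_t & 'I_(l i)} | tag y == i])).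
      by rewrite sumr_const.
    by move=> y; rewrite inE.
  rewrite (_ : #|xpredT| = n) // -[C *+ n]mulr_natr -/nR.
  have : C * nR <= eps * beta i ^+ 2.
    have -> : C = (K ^+ 2 + 1) * eta ^+ 2 * beta i ^+ 2.
      by rewrite /C /beta [eta ^+ i.+1]exprS; ring.
    have b2 : 0 <= beta i ^+ 2 := sqr_ge0 _.
    have := eta2; nra.
  move=> H.
  have : 0 <= ((l i)%:R - 1) * (eps * beta i ^+ 2).
    apply: mulr_ge0; first by have := lR1 i; lra.
    by apply: mulr_ge0; [lra | apply: sqr_ge0].
  lra.
have Oup : OPT cols k <= frob2 (colmx cols - colmx b).
  apply: ge_inf; last by exists (colmx b).
  by exists 0 => x [B [_ ->]]; exact: frob2_ge0.
have kn : (k < n)%N by have := max_card A; rewrite cardA.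
set W := \sum_(o < n) dotv (w (enum_val o)) (w (enum_val o)).
have Wp : 0 < W.
  rewrite /W (reidx (fun y => dotv (w y) (w y))) (bigD1 q) //=.
  have : 0 <= \sum_(y | y != q) dotv (w y) (w y) by apply: sumr_ge0 => y _; exact: dotv_ge0.
  have := wwp q; lra.
have Olow : W^-1 <= OPT cols k.
  apply: lb_le_inf; first by exists (frob2 (colmx cols - colmx b)), (colmx b).
  move=> x [B [rB' ->]].
  have := @frob_lb _ _ _ cols w hdual B; rewrite rB' => /(_ kn) H.
  by rewrite -[W^-1]mulr1 ler_pdivrMl.
have Op : 0 < OPT cols k by apply: lt_le_trans Olow; rewrite invr_gt0.
have U := le_trans Oup Fb.
set O := OPT cols k.
set L := (l i)%:R.
set bi := beta i.
have Lp : 0 < L := lgt0 i.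
have bp : 0 < bi := beta0 i.
apply: (@le_trans _ _ ((L * bi) ^+ 2 / (1 + eps) / O)); last first.
  by rewrite ler_wpM2r // invr_ge0 ltW.
apply: (@le_trans _ _ ((L * bi) ^+ 2 / (1 + eps) / (L * bi ^+ 2 * (1 + eps)))); last first.
  have XY : 0 <= (L * bi) ^+ 2 / (1 + eps) by apply: divr_ge0; [apply: sqr_ge0 | lra].
  have Zp : 0 < L * bi ^+ 2 * (1 + eps).
    by apply: mulr_gt0; [apply: mulr_gt0 => //; apply: exprn_gt0 | lra].
  by rewrite ler_wpM2l // lef_pV2 ?posrE.
have -> : (L * bi) ^+ 2 / (1 + eps) / (L * bi ^+ 2 * (1 + eps)) = L / (1 + eps) ^+ 2.
  have e1n : 1 + eps != 0 by apply: lt0r_neq0; lra.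
  by field; rewrite e1n lne0 lt0r_neq0.
rewrite ler_pdivlMr; last by apply: exprn_gt0; lra.
have : (1 - delta) * (1 + eps) ^+ 2 <= 1 by rewrite /eps; nra.
nra.
Qed.
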